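(* Let $R$ be a commutative domain with unit, let $f\in R$ be nonzero and non-invertible, and let $S=R[u,v]/(uv-f)$. Then the images of $u$ and $v$ are irreducible elements of $S$.
   Context: A nonzero element $r$ of a domain is irreducible if it is not invertible and whenever $r=r_1r_2$, one of $r_1,r_2$ is invertible. *)

(* Defs.v *)
From HB Require Import structures.
From mathcomp Require Import all_boot all_order all_algebra.
Set Implicit Arguments. Unset Strict Implicit. Unset Printing Implicit Defensive.
Import GRing.Theory.
Local Open Scope ring_scope.

(* The bivariate polynomial ring R[u,v] is modelled as {poly {poly R}}:
   the inner variable is u, the outer variable is v. *)
Definition uvar (R : nzRingType) : {poly {poly R}} := 'X%:P.
Definition vvar (R : nzRingType) : {poly {poly R}} := 'X.

Definition uv_rel (R : comNzRingType) (f : R) : {poly {poly R}} :=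
  uvar R * vvar R - f%:P%:P.

Definition eqS (R : comNzRingType) (f : R) (p q : {poly {poly R}}) : Prop :=
  exists h : {poly {poly R}}, p - q = h * uv_rel f.

Definition unitS (R : comNzRingType) (f : R) (p : {poly {poly R}}) : Prop :=
  exists w : {poly {poly R}}, eqS f (p * w) 1.

Definition irreducibleS (R : comNzRingType) (f : R) (p : {poly {poly R}}) : Prop :=
  [/\ ~ eqS f p 0, ~ unitS f p &
      forall a b : {poly {poly R}}, eqS f p (a * b) -> unitS f a \/ unitS f b].

(* Main.v *)
Require Import Defs.
From HB Require Import structures.
From mathcomp Require Import all_boot all_order all_algebra.
From mathcomp Require Import ring fraction zify.
Import GRing.Theory.
Local Open Scope ring_scope.


Notation tf := (@FracField.tofrac _).

Definition xF (R : idomainType) : {fraction {poly R}} := tf ('X : {poly R}).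
Definition yF {R : idomainType} (f : R) : {fraction {poly R}} := tf (f%:P) / xF R.
Definition phi {R : idomainType} (f : R) (p : {poly {poly R}}) : {fraction {poly R}} :=
  (map_poly tf p).[yF f].

Lemma xF_neq0 (R : idomainType) : xF R != 0.
Proof. by rewrite /xF tofrac_eq0 polyX_eq0. Qed.

Lemma phiM (R : idomainType) (f : R) p q : phi f (p * q) = phi f p * phi f q.
Proof. by rewrite /phi rmorphM hornerM. Qed.
Lemma phiB (R : idomainType) (f : R) p q : phi f (p - q) = phi f p - phi f q.
Proof. by rewrite /phi rmorphB hornerD hornerN. Qed.
Lemma phiC (R : idomainType) (f : R) c : phi f c%:P = tf c.
Proof. by rewrite /phi map_polyC hornerC. Qed.
Lemma phiX (R : idomainType) (f : R) : phi f 'X = yF f.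
Proof. by rewrite /phi map_polyX hornerX. Qed.
Lemma phi1 (R : idomainType) (f : R) : phi f 1 = 1.
Proof. by rewrite -polyC1 phiC rmorph1. Qed.

Lemma phi_rel (R : idomainType) (f : R) : phi f (uv_rel f) = 0.
Proof.
rewrite /uv_rel /uvar /vvar phiB phiM phiX !phiC /yF.
by rewrite mulrC -mulrA mulVf ?xF_neq0 // mulr1 subrr.
Qed.

Lemma phi_eqS (R : idomainType) (f : R) p q : eqS f p q -> phi f p = phi f q.
Proof.
case=> h E; apply/eqP; rewrite -subr_eq0 -phiB E phiM phi_rel mulr0 //.
Qed.


Definition NF {R : idomainType} (p0 p1 : {poly R}) : {poly {poly R}} :=
  p0%:P + 'X * map_poly polyC p1.

Lemma eqS_refl (R : idomainType) (f : R) p : eqS f p p.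
Proof. by exists 0; rewrite subrr mul0r. Qed.

Lemma nf_ex (R : idomainType) (f : R) p : exists p0 p1, eqS f p (NF p0 p1).
Proof.
elim/poly_ind: p => [|q c [q0 [q1 [h Eh]]]].
  by exists 0, 0; rewrite /NF rmorph0 rmorph0 mulr0 addr0; apply: eqS_refl.
have [r [d Eq0]] : exists r d, q0 = r * 'X + d%:P.
  elim/poly_ind: q0 {Eh} => [|r d _]; last by exists r, d.
  by exists 0, 0; rewrite mul0r add0r.
exists (r * f%:P + c), (q1 * 'X + d%:P).
exists (h * 'X + r%:P).
have -> : q = h * uv_rel f + NF q0 q1 by rewrite -Eh subrK.
rewrite /NF /uv_rel /uvar /vvar Eq0 !rmorphD !rmorphM /= map_polyX map_polyC /=.
ring.
Qed.


Definition K {R : idomainType} (f : R) (n : nat) (p0 p1 : {poly R}) : {poly R} :=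
  p0 * 'X^n + \poly_(i < n) (p1`_(n.-1 - i) * f ^+ (n - i)).

Lemma phiD (R : idomainType) (f : R) p q : phi f (p + q) = phi f p + phi f q.
Proof. by rewrite /phi rmorphD hornerD. Qed.

Lemma phiNF (R : idomainType) (f : R) n (p0 p1 : {poly R}) : (size p1 <= n)%N ->
  phi f (NF p0 p1) * xF R ^+ n = tf (K f n p0 p1).
Proof.
move=> sz.
rewrite /NF /K phiD phiM phiC phiX rmorphD rmorphM rmorphXn /= -/(xF R) mulrDl.
congr (_ + _).
rewrite /phi -map_poly_comp (horner_coef_wide _ (leq_trans (size_poly _ _) sz)).
under eq_bigr do rewrite coef_map /=.
rewrite poly_def rmorph_sum /= mulr_sumr mulr_suml.
rewrite [RHS](reindex_inj rev_ord_inj) /=.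
apply: eq_bigr => j _.
rewrite -mul_polyC rmorphM rmorphXn /= -/(xF R).
have -> : (n.-1 - (n - j.+1) = j)%N by have := ltn_ord j; lia.
have -> : (n - (n - j.+1) = j.+1)%N by have := ltn_ord j; lia.
rewrite polyCM rmorphXn /= rmorphM rmorphXn /=.
have -> : xF R ^+ n = xF R ^+ j.+1 * xF R ^+ (n - j.+1).
  by rewrite -exprD subnKC.
have -> : tf f%:P = yF f * xF R by rewrite /yF divfK // xF_neq0.
set y := yF f; set x := xF R.
rewrite [(y * x) ^+ _]exprMn !exprS.
move: (x ^+ (n - j.+1)) (x ^+ j) (y ^+ j) (tf (p1`_j)%:P) => a b c d.
rewrite /y /x; ring.
Qed.



Lemma coefK_hi {R : idomainType} (f : R) n (p0 p1 : {poly R}) i :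
  (K f n p0 p1)`_(n + i) = p0`_i.
Proof.
rewrite /K coefD coefMXn coef_poly.
have -> : (n + i < n)%N = false by lia.
by rewrite addr0 addKn.
Qed.

Lemma coefK_lo {R : idomainType} (f : R) n (p0 p1 : {poly R}) i : (i < n)%N ->
  (K f n p0 p1)`_i = p1`_(n.-1 - i) * f ^+ (n - i).
Proof. by move=> hi; rewrite /K coefD coefMXn coef_poly hi add0r. Qed.

Lemma K_const {R : idomainType} (f : R) n (p0 p1 : {poly R}) a :
  f != 0 -> (size p1 <= n)%N -> K f n p0 p1 = a *: 'X^n -> p0 = a%:P /\ p1 = 0.
Proof.
move=> hf sz E; split; apply/polyP => i.
  rewrite -(coefK_hi f n p0 p1) E coefZ coefXn coefC.
  by case: i => [|i]; rewrite ?addn0 ?eqxx ?mulr1 // -[X in _ == X]addn0 eqn_add2l mulr0.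
rewrite coef0.
case: (ltnP i n) => hi; last by rewrite nth_default // (leq_trans sz hi).
have hi' : (n.-1 - i < n)%N by lia.
have := coefK_lo f n p0 p1 _ hi'.
rewrite E coefZ coefXn.
have -> : (n.-1 - i == n)%N = false by apply/negbTE; lia.
have -> : (n.-1 - (n.-1 - i) = i)%N by lia.
rewrite mulr0 => /esym /eqP; rewrite mulf_eq0 expf_eq0 (negbTE hf) andbF orbF.
by move/eqP.
Qed.


Lemma mono1 {R : idomainType} m (A B : {poly R}) (d : R) : d != 0 ->
  A * B = d *: 'X^m -> exists a k, A = a *: 'X^k.
Proof.
elim: m A B => [|m IH] A B hd E.
- have hdX : d *: ('X^0 : {poly R}) != 0 by rewrite scale_poly_eq0 negb_or hd monic_neq0 ?monicXn.
  have hA : A != 0 by apply/eqP => A0; move: hdX; rewrite -E A0 mul0r eqxx.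
  have hB : B != 0 by apply/eqP => B0; move: hdX; rewrite -E B0 mulr0 eqxx.
  have := congr1 (fun p : {poly R} => size p) E; rewrite size_mul // expr0 alg_polyC size_polyC hd.
  move=> /= hs.
  have hA0 : (0 < size A)%N by rewrite size_poly_gt0.
  have hB0 : (0 < size B)%N by rewrite size_poly_gt0.
  rewrite -subn1 in hs.
  have hsA : (size A = 1)%N.
    move: hs hA0 hB0; rewrite /=; set a := size A; set b := size B.
    move=> *; rewrite /a; lia.
  move/eqP: hsA.
  case/size_poly1P => c _ ->; exists c, 0%N; by rewrite expr0 alg_polyC.
- have hX : ('X : {poly R}) != 0 by rewrite polyX_eq0.
  case: (boolP (root A 0)) => [/factor_theorem [A' EA]|rA].
    rewrite EA polyC0 subr0 in E *.
    have E' : A' * B = d *: 'X^m.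
      apply: (mulIf hX); rewrite -scalerAl -exprSr -E; ring.
    have [a [k ->]] := IH _ _ hd E'.
    by exists a, k.+1; rewrite exprSr scalerAl.
  case: (boolP (root B 0)) => [/factor_theorem [B' EB]|rB].
    rewrite EB polyC0 subr0 in E.
    have E' : A * B' = d *: 'X^m.
      apply: (mulIf hX); rewrite -scalerAl -exprSr -E; ring.
    exact: IH _ _ hd E'.
  have := congr1 (fun p => p.[0]) E; rewrite /= hornerM hornerZ hornerXn expr0n /= mulr0.
  by move/eqP; rewrite mulf_eq0 -!rootE (negbTE rA) (negbTE rB).
Qed.

Lemma mono2 {R : idomainType} m (A B : {poly R}) (d : R) : d != 0 ->
  A * B = d *: 'X^m -> exists a b k k', [/\ A = a *: 'X^k, B = b *: 'X^k',
     a * b = d & (k + k' = m)%N].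
Proof.
move=> hd E.
have [a [k EA]] := mono1 _ _ _ _ hd E.
have [b [k' EB]] : exists b k', B = b *: 'X^k' by apply: (mono1 m B A d hd); rewrite mulrC.
exists a, b, k, k'.
have E2 : (a * b) *: 'X^(k + k') = d *: 'X^m :> {poly R}.
  by rewrite -E EA EB -scalerAl -scalerAr scalerA exprD.
have := congr1 (fun p : {poly R} => p`_m) E2; rewrite !coefZ !coefXn eqxx mulr1.
case: eqP => [hk|_]; last by rewrite mulr0 => /esym/eqP; rewrite (negbTE hd).
by rewrite mulr1 => hab; split.
Qed.


Lemma eqS_unit {R : idomainType} (f : R) a a' : eqS f a a' -> unitS f a' -> unitS f a.
Proof.
move=> [h Eh] [w [h' Eh']]; exists w; exists (h * w + h').
have -> : a * w - 1 = (a - a') * w + (a' * w - 1) by ring.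
by rewrite Eh Eh'; ring.
Qed.

Lemma unitS_C {R : idomainType} (f : R) (c : R) : c \is a GRing.unit -> unitS f c%:P%:P.
Proof.
move=> hc; exists (c^-1)%:P%:P; exists 0.
by rewrite -!rmorphM /= mulrV // !rmorph1 subrr mul0r.
Qed.

Lemma funit {R : idomainType} (f t : R) j : f ^+ j.+1 * t = 1 -> f \is a GRing.unit.
Proof. by move=> E; apply/unitrPr; exists (f ^+ j * t); rewrite mulrA -exprS. Qed.

Lemma side {R : idomainType} (f : R) n k (a : {poly {poly R}}) (a0 a1 : {poly R}) al :
  f != 0 -> (size a1 <= n)%N -> K f n a0 a1 = al *: 'X^k -> eqS f a (NF a0 a1) ->
  (k = n -> al \is a GRing.unit -> unitS f a) /\
  ((k < n)%N -> exists t, al = f ^+ (n - k) * t).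
Proof.
move=> hf sz EK ea; split.
  move=> hk hu; subst k.
  have [E0 E1] := K_const _ _ _ _ _ hf sz EK.
  rewrite E0 E1 in ea.
  apply: (eqS_unit _ _ _ ea); rewrite /NF rmorph0 mulr0 addr0; exact: unitS_C.
move=> hk; exists (a1`_(n.-1 - k)).
have := coefK_lo f n a0 a1 _ hk; rewrite EK coefZ coefXn eqxx mulr1 => ->.
by rewrite mulrC.
Qed.

Lemma phi_nz {R : idomainType} (f : R) p : phi f p != 0 -> ~ eqS f p 0.
Proof. by move=> h /phi_eqS E; move: h; rewrite E /phi rmorph0 horner0 eqxx. Qed.


Lemma tf_inj {R : idomainType} (p q : {poly R}) : tf p = tf q -> p = q.
Proof. by move/eqP; rewrite tofrac_eq => /eqP. Qed.

Lemma phi_u {R : idomainType} (f : R) : phi f (uvar R) = xF R.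
Proof. by rewrite /uvar phiC. Qed.

Lemma u_irr (R : idomainType) (f : R) (hf0 : f != 0)
  (hfu : f \isn't a GRing.unit) : irreducibleS f (uvar R).
Proof.
have hx := xF_neq0 R.
split.
- by apply: phi_nz; rewrite phi_u.
- move=> [w Ew].
  have [w0 [w1 ew]] := nf_ex _ f w.
  have := phi_eqS _ _ _ _ Ew; rewrite phiM phi1 (phi_eqS _ _ _ _ ew) phi_u => E1.
  set s := size w1.
  have := phiNF _ f s.+1 w0 w1 (leqnSn s).
  move=> EK.
  have : 'X * K f s.+1 w0 w1 = 'X^(s.+1).
    apply: tf_inj; rewrite rmorphM rmorphXn /= -/(xF R) -EK mulrA E1 mul1r //.
  move=> /(congr1 (fun p : {poly R} => p`_s.+1)).
  rewrite coefXM /= coefK_lo // coefXn eqxx subSnn subnn expr1 => E.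
  by move: hfu; rewrite (funit f (w1`_0) 0) // expr1 mulrC.
- move=> a b Eab.
  have [a0 [a1 ea]] := nf_ex _ f a.
  have [b0 [b1 eb]] := nf_ex _ f b.
  set n := maxn (size a1) (size b1).
  have sa : (size a1 <= n)%N by rewrite leq_maxl.
  have sb : (size b1 <= n)%N by rewrite leq_maxr.
  have EKa := phiNF _ f n a0 a1 sa.
  have EKb := phiNF _ f n b0 b1 sb.
  have := phi_eqS _ _ _ _ Eab; rewrite phiM (phi_eqS _ _ _ _ ea) (phi_eqS _ _ _ _ eb) phi_u => E1.
  have EE : K f n a0 a1 * K f n b0 b1 = 1 *: 'X^((n + n).+1).
    apply: tf_inj; rewrite scale1r rmorphM rmorphXn /= -/(xF R) -EKa -EKb.
    rewrite exprS exprD E1; ring.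
  have [al [be [k [k' [Ea Eb Eab1 Ekk]]]]] := mono2 _ _ _ _ (oner_neq0 R) EE.
  have [sa1 sa2] := side _ _ _ _ _ _ _ hf0 sa Ea ea.
  have [sb1 sb2] := side _ _ _ _ _ _ _ hf0 sb Eb eb.
  case: (ltngtP k n) => hk.
  + have [t Et] := sa2 hk.
    move: hfu; rewrite (funit f (t * be) (n - k).-1) //.
    by rewrite mulrA prednK ?subn_gt0 // -Et.
  + case: (ltngtP k' n) => hk'.
    * have [t Et] := sb2 hk'.
      move: hfu; rewrite (funit f (t * al) (n - k').-1) //.
      by rewrite mulrA prednK ?subn_gt0 // -Et mulrC.
    * lia.
    * right; apply: sb1 => //; apply/unitrPr; exists al; by rewrite mulrC.
  + left; apply: sa1 => //; apply/unitrPr; by exists be.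
Qed.

Lemma funit2 {R : idomainType} (f t : R) j : f != 0 -> f ^+ j.+2 * t = f ->
  f \is a GRing.unit.
Proof.
move=> hf E; apply: (funit f t j); apply: (mulfI hf).
by rewrite mulr1 mulrA -exprS.
Qed.

Lemma cancel1 {R : idomainType} (f t s : R) : f != 0 -> f * t * s = f -> t * s = 1.
Proof. by move=> hf E; apply: (mulfI hf); rewrite mulr1 mulrA. Qed.

Lemma v_irr (R : idomainType) (f : R) (hf0 : f != 0)
  (hfu : f \isn't a GRing.unit) : irreducibleS f (vvar R).
Proof.
have hx := xF_neq0 R.
have phi_v : phi f (vvar R) = yF f by rewrite /vvar phiX.
have yx : yF f * xF R = tf f%:P by rewrite /yF divfK.
split.
- apply: phi_nz; rewrite phi_v /yF; apply: mulf_neq0; first by rewrite tofrac_eq0 polyC_eq0.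
  by rewrite invr_eq0.
- move=> [w Ew].
  have [w0 [w1 ew]] := nf_ex _ f w.
  have := phi_eqS _ _ _ _ Ew; rewrite phiM phi1 (phi_eqS _ _ _ _ ew) phi_v => E1.
  set s := size w1.
  have EK := phiNF _ f s w0 w1 (leqnn s).
  have : f%:P * K f s w0 w1 = 'X^(s.+1).
    apply: tf_inj; rewrite rmorphM rmorphXn /= -/(xF R) -EK -yx.
    rewrite exprS -[RHS]mul1r -E1; ring.
  move=> /(congr1 (fun p : {poly R} => p`_(s + 1))).
  rewrite coefCM coefK_hi coefXn addn1 eqxx => E.
  by move: hfu; rewrite (funit f (w0`_1) 0) // expr1.
- move=> a b Eab.
  have [a0 [a1 ea]] := nf_ex _ f a.
  have [b0 [b1 eb]] := nf_ex _ f b.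
  set N := maxn (size a1) (size b1).
  have sa : (size a1 <= N.+1)%N by rewrite leqW // leq_maxl.
  have sb : (size b1 <= N.+1)%N by rewrite leqW // leq_maxr.
  have EKa := phiNF _ f N.+1 a0 a1 sa.
  have EKb := phiNF _ f N.+1 b0 b1 sb.
  have := phi_eqS _ _ _ _ Eab; rewrite phiM (phi_eqS _ _ _ _ ea) (phi_eqS _ _ _ _ eb) phi_v => E1.
  have EE : K f N.+1 a0 a1 * K f N.+1 b0 b1 = f *: 'X^(N + N.+1).
    apply: tf_inj; rewrite -mul_polyC !rmorphM rmorphXn /= -/(xF R) -EKa -EKb -yx E1.
    rewrite exprD !exprS; ring.
  have [al [be [k [k' [Ea Eb Eab1 Ekk]]]]] := mono2 _ _ _ _ hf0 EE.
  have [sa1 sa2] := side _ _ _ _ _ _ _ hf0 sa Ea ea.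
  have [sb1 sb2] := side _ _ _ _ _ _ _ hf0 sb Eb eb.
  case: (ltngtP k N.+1) => hk.
  + have [t Et] := sa2 hk.
    case: (ltngtP k' N.+1) => hk'.
    * lia.
    * have hj : (N.+1 - k = (N.+1 - k).-2.+2)%N by lia.
      move: hfu; rewrite (funit2 f (t * be) (N.+1 - k).-2) //.
      by rewrite mulrA -hj -Et.
    * right; apply: sb1 => //; apply/unitrPr; exists t.
      have hj : (N.+1 - k = 1)%N by lia.
      rewrite Et hj expr1 in Eab1.
      by rewrite mulrC; apply: (cancel1 _ _ _ hf0).
  + have hk2 : (k' < N.+1)%N by lia.
    have [t Et] := sb2 hk2.
    have hj : (N.+1 - k' = (N.+1 - k').-2.+2)%N by lia.
    move: hfu; rewrite (funit2 f (t * al) (N.+1 - k').-2) //.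
    by rewrite mulrA -hj -Et mulrC.
  + left; apply: sa1 => //.
    have hk' : (k' < N.+1)%N by lia.
    have [t Et] := sb2 hk'.
    have hj : (N.+1 - k' = 1)%N by lia.
    apply/unitrPr; exists t.
    rewrite Et hj expr1 in Eab1.
    apply: (cancel1 _ _ _ hf0); rewrite -[RHS]Eab1 [RHS]mulrCA [RHS]mulrA //.
Qed.


Theorem lemma1p3 (R : idomainType) (f : R) (hf0 : f != 0)
  (hfu : f \isn't a GRing.unit) :
  irreducibleS f (uvar R) /\ irreducibleS f (vvar R).
Proof. by split; [apply: u_irr | apply: v_irr]. Qed.
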